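(* Any $1$-consistent algorithm for the $\{0,1\}$-speed SSP problem has robustness at least $\frac{2(m-1)}{m}$, where $m$ is the total number of machines.
   Context: $\{0,1\}$-speed SSP: there are $n$ jobs with processing times $p_1,\dots,p_n\ge0$ and $m$ machines, each of speed $0$ (unavailable) or $1$ (available). In the partitioning stage the algorithm knows $\mathbf p$, $m$ and a prediction $\hat m$ of the number of available machines, and partitions the jobs into $m$ possibly empty bags. In the scheduling stage the actual number $m_0\ge1$ of available machines is revealed and each bag is assigned whole to one of the $m_0$ identical unit-speed machines; the makespan is the maximum total processing time on a machine. $opt(\mathbf p,x)$ is the minimum makespan of scheduling the individual jobs on $x$ identical unit-speed machines; $alg(\mathbf p,\hat m,m_0)$ is the algorithm's makespan. An algorithm is $1$-consistent if $alg(\mathbf p,m_0,m_0)\le opt(\mathbf p,m_0)$ for all $\mathbf p,m_0$; its robustness is $\sup_{\mathbf p,\hat m,m_0} alg(\mathbf p,\hat m,m_0)/opt(\mathbf p,m_0)$. *)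

(* Defs.v *)
From mathcomp Require Import all_boot all_order all_algebra.
Set Implicit Arguments. Unset Strict Implicit. Unset Printing Implicit Defensive.
Import Order.TTheory GRing.Theory Num.Theory.
Local Open Scope ring_scope.

Section SSP.
Variable R : realFieldType.

Definition makespan (n x : nat) (p : 'I_n -> R) (a : 'I_n -> 'I_x) : R :=
  \big[Num.max/0]_(j < x) \sum_(i < n | a i == j) p i.

(* opt(p, k.+1): minimum makespan over all schedules of the individual jobs
   on k.+1 machines (the machine count is k.+1 >= 1). *)
Definition opt (n k : nat) (p : 'I_n -> R) : R :=
  \big[Num.min/makespan p (fun _ => (ord0 : 'I_k.+1))]_(a : {ffun 'I_n -> 'I_k.+1})
     makespan p a.

(* A (deterministic) algorithm for {0,1}-speed SSP with m machines:
   - partitioning stage: given the jobs p and the prediction mhat, put each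
     job into one of m bags;
   - scheduling stage: given p, mhat and the actual number k.+1 (1 <= k.+1 <= m)
     of available machines, assign each bag to one of the k.+1 machines. *)
Record ssp_alg (m : nat) := SSPAlg {
  partition : forall n : nat, ('I_n -> R) -> nat -> 'I_n -> 'I_m;
  schedule : forall n : nat, ('I_n -> R) -> nat -> forall k : 'I_m, 'I_m -> 'I_k.+1
}.

Definition alg_cost (m : nat) (A : ssp_alg m) (n : nat) (p : 'I_n -> R)
  (mhat : nat) (k : 'I_m) : R :=
  makespan p (fun i => schedule A p mhat k (partition A p mhat i)).

Definition nonneg_jobs (n : nat) (p : 'I_n -> R) := forall i, 0 <= p i.

Definition one_consistent (m : nat) (A : ssp_alg m) : Prop :=
  forall (n : nat) (p : 'I_n -> R), nonneg_jobs p ->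
    forall k : 'I_m, alg_cost A p k.+1 k <= opt k p.

Definition robust_within (m : nat) (A : ssp_alg m) (rho : R) : Prop :=
  forall (n : nat) (p : 'I_n -> R), nonneg_jobs p ->
    forall mhat : nat, (1 <= mhat <= m)%N ->
    forall k : 'I_m, alg_cost A p mhat k <= rho * opt k p.

End SSP.

(* Main.v *)
Require Import Defs.
From mathcomp Require Import all_boot all_order all_algebra.
From mathcomp Require Import lra.
Import Order.TTheory GRing.Theory Num.Theory.
Local Open Scope ring_scope.

Section Helpers.
Variable R : realFieldType.

Lemma le_bigmax_seq (I : eqType) (r : seq I) (P : pred I) (F : I -> R) x0 i0 :
  i0 \in r -> P i0 -> F i0 <= \big[Num.max/x0]_(i <- r | P i) F i.
Proof.
elim: r => //= a r IH; rewrite inE big_cons => /orP[/eqP<-|H] HP.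
  by rewrite HP le_max lexx.
by case: (P a); [rewrite le_max IH ?orbT | exact: IH].
Qed.

Lemma bigmin_le_seq (I : eqType) (r : seq I) (F : I -> R) x0 i0 :
  i0 \in r -> \big[Num.min/x0]_(i <- r) F i <= F i0.
Proof.
elim: r => //= a r IH; rewrite inE big_cons => /orP[/eqP<-|H].
  by rewrite ge_min lexx.
by rewrite ge_min IH ?orbT.
Qed.

Lemma makespan_ge0 n x (p : 'I_n -> R) a : 0 <= makespan p (x := x) a.
Proof. by rewrite /makespan; elim/big_rec: _ => // i y _ Hy; rewrite le_max Hy orbT. Qed.

Lemma makespan_ge n x (p : 'I_n -> R) (a : 'I_n -> 'I_x) j :
  \sum_(i < n | a i == j) p i <= makespan p a.
Proof.
rewrite /makespan.
have := @le_bigmax_seq _ (index_enum 'I_x) predT (fun j => \sum_(i < n | a i == j) p i) 0 j (mem_index_enum j) erefl.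
done.
Qed.

Lemma makespan_le n x (p : 'I_n -> R) (a : 'I_n -> 'I_x) c :
  0 <= c -> (forall j, \sum_(i < n | a i == j) p i <= c) -> makespan p a <= c.
Proof.
move=> c0 H; rewrite /makespan; elim/big_rec: _ => // i y _ Hy.
by rewrite ge_max H Hy.
Qed.

Lemma opt_ge0 n k (p : 'I_n -> R) : 0 <= opt k p.
Proof.
rewrite /opt; elim/big_rec: _ => [|i y _ Hy]; first exact: makespan_ge0.
by rewrite le_min Hy makespan_ge0.
Qed.

Lemma opt_le n k (p : 'I_n -> R) (a : 'I_n -> 'I_k.+1) : opt k p <= makespan p a.
Proof.
have -> : makespan p a = makespan p [ffun i => a i].
  by rewrite /makespan; apply: eq_bigr => j _; apply: eq_bigl => i; rewrite ffunE.
rewrite /opt.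
have := @bigmin_le_seq _ (index_enum {ffun 'I_n -> 'I_k.+1}) (fun a => makespan p a) (makespan p (fun _ => (ord0 : 'I_k.+1))) [ffun i => a i] (mem_index_enum _).
done.
Qed.

Lemma load_comp n m x (p : 'I_n -> R) (b : 'I_n -> 'I_m) (s : 'I_m -> 'I_x) j :
  \sum_(i < n | s (b i) == j) p i = \sum_(c < m | s c == j) \sum_(i < n | b i == c) p i.
Proof.
rewrite (partition_big b (fun c => s c == j)) //.
apply: eq_bigr => c /eqP Hc; apply: eq_bigl => i.
by case: (b i =P c) => [->|_]; rewrite ?Hc ?eqxx ?andbF.
Qed.

Lemma load_tot n x (p : 'I_n -> R) (a : 'I_n -> 'I_x) :
  \sum_(j < x) \sum_(i < n | a i == j) p i = \sum_(i < n) p i.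
Proof. by rewrite (partition_big a predT). Qed.

End Helpers.

Lemma cnt_div N a b j : N = (a * b.+1)%N -> (j < a)%N ->
  (\sum_(i < N | i %/ b.+1 == j) 1 = b.+1)%N.
Proof.
move=> ->; elim: a j => // a IH j Hj.
rewrite mulSn big_split_ord /=.
case: j Hj => [|j] Hj.
  rewrite [X in (_ + X)%N]big1 ?addn0; last by move=> i /=; rewrite divnDl ?dvdnn // divnn.
  rewrite (eq_bigl predT) ?sum1_card ?card_ord // => i /=.
  by rewrite divn_small.
rewrite [X in (X + _)%N]big1 ?add0n; last by move=> i /=; rewrite divn_small.
rewrite (eq_bigl (fun i : 'I_(a * b.+1) => (i %/ b.+1 == j)%N)) ?IH // => i /=.
by rewrite divnDl ?dvdnn // divnn add1n eqSS.
Qed.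

Lemma div_lt N a b (i : 'I_N) : N = (a * b.+1)%N -> (i %/ b.+1 < a)%N.
Proof. by move=> HN; rewrite ltn_divLR // -HN. Qed.

Lemma sum1R (R : realFieldType) n (P : pred 'I_n) :
  \sum_(i < n | P i) (1 : R) = (\sum_(i < n | P i) 1%N)%:R.
Proof. by rewrite natr_sum. Qed.

Theorem lemma18 (R : realFieldType) (m : nat) (hm : (0 < m)%N)
  (A : ssp_alg R m) (hcons : one_consistent A) (rho : R)
  (hrob : robust_within A rho) :
  2 * (m%:R - 1) / m%:R <= rho.
Proof.
case: m hm A hcons hrob => [//|[|M]] _ A hcons hrob.
  rewrite subrr mulr0 mul0r.
  pose p := fun _ : 'I_1 => (1 : R).
  have nn : nonneg_jobs p by move=> i; rewrite /p ler01.
  have := hrob 1%N p nn 1%N erefl ord0.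
  rewrite /alg_cost.
  set a := (fun i => _).
  have H1 := @makespan_ge _ _ _ p a (a ord0).
  rewrite (bigD1 ord0) //= in H1.
  have H2 : 0 <= \sum_(i < 1 | (a i == a ord0) && (i != ord0)) p i.
    by apply: sumr_ge0 => i _; rewrite /p ler01.
  have H3 := @opt_ge0 _ _ 0 p.
  move: H1 H2 H3; rewrite /p => H1 H2 H3 H4.
  set o := opt 0 _ in H3 H4. set s := \sum_(_ < _ | _) _ in H1 H2.
  set mk := makespan _ _ in H1 H4.
  nra.
set n := (M.+2 * M.+1)%N.
pose p := fun _ : 'I_n => (1 : R).
have nn : nonneg_jobs p by move=> i; rewrite /p ler01.
pose k0 : 'I_M.+2 := ord_max.
have Hc := hcons n p nn k0.
rewrite /alg_cost /= in Hc.
set beta := Defs.partition A p M.+2 in Hc.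
set sigma := schedule A p M.+2 k0 in Hc.
pose L b := \sum_(i < n | beta i == b) p i.
pose ML j := \sum_(b < M.+2 | sigma b == j) L b.
have HLge0 : forall b, 0 <= L b by move=> b; apply: sumr_ge0 => i _; rewrite /p ler01.
have Hopt1 : opt M.+1 p <= (M.+1)%:R.
  have Hd : forall i : 'I_n, (i %/ M.+1 < M.+2)%N by move=> i; exact: (@div_lt n M.+2 M).
  apply: le_trans (@opt_le _ _ _ p (fun i => Ordinal (Hd i))) _.
  apply: makespan_le => // j.
  rewrite sum1R ler_nat.
  rewrite (eq_bigl (fun i : 'I_n => (i %/ M.+1 == j)%N)); last by move=> i; rewrite -val_eqE.
  by rewrite (@cnt_div n M.+2 M j) //.
have HML : forall j, ML j <= (M.+1)%:R.
  move=> j; apply: le_trans (le_trans _ Hc) Hopt1.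
  rewrite /ML /L -load_comp; exact: makespan_ge.
have Htot : \sum_(j < M.+2) ML j = n%:R.
  transitivity (\sum_(j < M.+2) \sum_(i < n | sigma (beta i) == j) p i).
    by apply: eq_bigr => j _; rewrite /ML /L load_comp.
  by rewrite load_tot sumr_const card_ord.
have HMLeq : forall j, ML j = (M.+1)%:R.
  have H0 : \sum_(j < M.+2) ((M.+1)%:R - ML j) = 0.
    by rewrite sumrB Htot sumr_const card_ord /n natrM mulr_natl subrr.
  have Hnn : forall i : 'I_M.+2, true -> 0 <= M.+1%:R - ML i.
    by move=> i _; rewrite subr_ge0 HML.
  move=> j; have := @psumr_eq0P _ _ _ _ Hnn H0 j isT.
  by move=> /subr0_eq.
have Hne : forall j, [exists b, (sigma b == j) && (L b != 0)].
  move=> j; rewrite -[X in is_true X]negbK; apply/negP => /existsPn H.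
  have : ML j = 0.
    by rewrite /ML big1 // => b Hb; move: (H b); rewrite Hb /= negbK => /eqP.
  by rewrite HMLeq => /eqP; rewrite pnatr_eq0.
pose f (j : 'I_M.+2) : 'I_M.+2 := odflt j [pick b | (sigma b == j) && (L b != 0)].
have Hf : forall j, sigma (f j) = j.
  move=> j; rewrite /f; case: pickP => [b /andP[/eqP -> _] //|H].
  by move/existsP: (Hne j) => [b Hb]; rewrite H in Hb.
have finj : injective f by move=> j1 j2 E; rewrite -(Hf j1) E Hf.
have [g fg gf] := injF_bij finj.
have Hsg : forall b, sigma b = g b by move=> b; rewrite -{1}(gf b) Hf.
have HL : forall b, L b = (M.+1)%:R.
  move=> b; rewrite -(HMLeq (sigma b)) /ML (bigD1 b) //= big1 ?addr0 // => b' /andP[/eqP Hj Hne'].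
  have : b' = b by rewrite -(gf b') -(gf b) -!Hsg Hj.
  by move=> E; rewrite E eqxx in Hne'.
have Hmh : (1 <= M.+2 <= M.+2)%N by rewrite leqnn.
have k1lt : (M < M.+2)%N by [].
pose k1 : 'I_M.+2 := Ordinal k1lt.
have Hr := hrob n p nn M.+2 Hmh k1.
rewrite /alg_cost in Hr.
set tau := schedule A p M.+2 k1 in Hr.
have : ~~ injectiveb tau.
  by apply/negP => /injectiveP /leq_card; rewrite !card_ord /= ltnn.
case/injectivePn => b1 [b2 Hne12 Heq].
have Hlow : 2 * (M.+1)%:R <= makespan p (fun i => tau (beta i)).
  apply: le_trans (@makespan_ge _ _ _ p _ (tau b1)).
  rewrite load_comp (bigD1 b1) //= (bigD1 b2) /=; last by rewrite Heq eqxx eq_sym Hne12.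
  have E1 := HL b1; have E2 := HL b2; rewrite /L in E1 E2; rewrite E1 E2.
  set r := \sum_(i < M.+2 | _) _.
  have : 0 <= r by apply: sumr_ge0 => i _; exact: HLge0.
  lra.
have Hopt2 : opt M p <= (M.+2)%:R.
  have Hd : forall i : 'I_n, (i %/ M.+2 < M.+1)%N by move=> i; exact: (@div_lt n M.+1 M.+1 i (mulnC _ _)).
  apply: le_trans (@opt_le _ _ _ p (fun i => Ordinal (Hd i))) _.
  apply: makespan_le => // j.
  rewrite sum1R ler_nat.
  rewrite (eq_bigl (fun i : 'I_n => (i %/ M.+2 == j)%N)); last by move=> i; rewrite -val_eqE.
  by rewrite (@cnt_div n M.+1 M.+1 j (mulnC _ _)).
have Ho := @opt_ge0 _ _ M p.
rewrite ler_pdivrMr ?ltr0Sn // [M.+2%:R]mulrS addrC addrK.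
move: Hr Hlow Hopt2 Ho.
set o := opt M p. set mk := makespan _ _. rewrite [M.+2%:R]mulrS.
set x := M.+1%:R => Hr Hlow Hopt2 Ho.
have x0 : 0 < x by rewrite /x ltr0Sn.
have [r0|r0] := leP 0 rho.
  have : rho * o <= rho * (1 + x) by rewrite ler_wpM2l.
  lra.
nra.
Qed.
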